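(* Let $F:\mathbb R^n\to\mathbb R^n$ be monotone with $\|F(z)-F(z')\|\le\ell\|z-z'\|$ and $\|\partial F(z)-\partial F(z')\|_\sigma\le\Lambda\|z-z'\|$. Let $\eta>0$, $z^{(-1)},z^{(0)}\in\mathbb R^n$, $z^{(t+1)}=z^{(t)}-2\eta F(z^{(t)})+\eta F(z^{(t-1)})$, $w^{(t)}:=z^{(t)}+\eta F(z^{(t-1)})$, $A^{(t)}:=\int_0^1\partial F(w^{(t)}-(1-\alpha)\eta F(z^{(t)}))d\alpha$, $B^{(t)}:=\int_0^1\partial F(w^{(t)}-(1-\alpha)\eta F(z^{(t-1)}))d\alpha$. Fix an integer $T\ge1$, set $C^{(T)}:=0$ and recursively $C^{(t-1)}:=(I-\eta A^{(t)}+C^{(t)})^{-1}\eta(\eta A^{(t)}-C^{(t)})B^{(t)}$ for $t=T,\dots,0$, and define $$D^{(t)}:=-\eta C^{(t)}B^{(t)}+(I-\eta A^{(t)}+C^{(t)})^{-1}(\eta A^{(t)}-C^{(t)})^2\eta B^{(t)}.$$ Suppose there is $L_0>0$ such that for all $0\le t\le T$, $\max\{\eta\|A^{(t)}\|_\sigma,\eta\|B^{(t)}\|_\sigma\}\le L_0\le\sqrt{1/200}$, and $\eta\ell\le 2/3$. Then for each $t\in\{1,\dots,T\}$, $$D^{(t)}+(D^{(t)})^\top\preceq 6L_0\eta^2(B^{(t)})^\top B^{(t)}+4L_0\eta^2A^{(t)}(A^{(t)})^\top+\Big(4L_0+\frac1{3L_0}\Big)C^{(t)}(C^{(t)})^\top$$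 and $$(D^{(t)})^\top D^{(t)}\preceq 60L_0^4\eta^2(B^{(t)})^\top B^{(t)}.$$
   Context: $F$ monotone means $\langle F(z')-F(z),z'-z\rangle\ge0$ for all $z,z'$. $\partial F$ is the Jacobian; $\|\cdot\|_\sigma$ the spectral norm; $S\preceq T$ means $T-S$ is positive semidefinite. (Under these hypotheses the inverses in the definitions exist.) *)

(* Defs.v *)
From HB Require Import structures.
From mathcomp Require Import all_boot all_order all_algebra.
From mathcomp Require Import all_classical all_reals all_analysis.
Set Implicit Arguments. Unset Strict Implicit. Unset Printing Implicit Defensive.
Import Order.TTheory GRing.Theory Num.Theory.
Import numFieldNormedType.Exports.
Local Open Scope classical_set_scope.
Local Open Scope ring_scope.

Section Defs.
Variables (R : realType) (n : nat).
Notation vec := 'cV[R]_n.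
Notation mat := 'M[R]_n.

Definition dotv (u v : vec) : R := (u^T *m v) 0 0.
Definition enorm (v : vec) : R := Num.sqrt (dotv v v).

Definition specnorm (M : mat) : R :=
  sup [set enorm (M *m x) | x in [set x : vec | enorm x <= 1]].

Definition psd (M : mat) : Prop := forall x : vec, 0 <= (x^T *m M *m x) 0 0.
Definition loewner_le (S T : mat) : Prop := psd (T - S).

Definition monotone_op (F : vec -> vec) : Prop :=
  forall z z' : vec, 0 <= dotv (F z' - F z) (z' - z).

Definition is_jacobian (F : vec -> vec) (J : vec -> mat) : Prop :=
  forall z : vec, forall e : R, 0 < e -> exists2 d : R, 0 < d &
    forall h : vec, enorm h < d ->
      enorm (F (z + h) - F z - J z *m h) <= e * enorm h.

Definition mat_int01 (M : R -> mat) : mat :=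
  \matrix_(i, j) (\int[(@lebesgue_measure R)]_(a in `[0%R, 1%R]) M a i j).

Variables (F : vec -> vec) (J : vec -> mat) (eta : R) (zm1 z0 : vec).

(* state t = (z^(t-1), z^(t)) *)
Fixpoint og_state (t : nat) : vec * vec :=
  match t with
  | 0 => (zm1, z0)
  | t'.+1 => let (zp, zc) := og_state t' in
             (zc, zc - (2 * eta) *: F zc + eta *: F zp)
  end.

Definition zseq (t : nat) : vec := (og_state t).2.
Definition zprev (t : nat) : vec := (og_state t).1.
Definition wseq (t : nat) : vec := zseq t + eta *: F (zprev t).

Definition ogA (t : nat) : mat :=
  mat_int01 (fun a => J (wseq t - ((1 - a) * eta) *: F (zseq t))).
Definition ogB (t : nat) : mat :=
  mat_int01 (fun a => J (wseq t - ((1 - a) * eta) *: F (zprev t))).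

Variable T : nat.

(* Caux k = C^(T-k); C^(T) = 0,
   C^(t-1) = (I - eta A^(t) + C^(t))^{-1} eta (eta A^(t) - C^(t)) B^(t). *)
Fixpoint Caux (k : nat) : mat :=
  match k with
  | 0 => 0
  | k'.+1 => let t := (T - k')%N in
             invmx (1%:M - eta *: ogA t + Caux k')
               *m (eta *: (eta *: ogA t - Caux k')) *m ogB t
  end.

Definition ogC (t : nat) : mat := Caux (T - t).

Definition ogD (t : nat) : mat :=
  - (eta *: (ogC t *m ogB t))
  + invmx (1%:M - eta *: ogA t + ogC t)
      *m ((eta *: ogA t - ogC t) *m (eta *: ogA t - ogC t))
      *m (eta *: ogB t).

End Defs.

(* Main.v *)
Require Import Defs.
From HB Require Import structures.
From mathcomp Require Import all_boot all_order all_algebra.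
From mathcomp Require Import all_classical all_reals all_analysis.
From mathcomp Require Import ring lra.
Set Implicit Arguments. Unset Strict Implicit. Unset Printing Implicit Defensive.
Import Order.TTheory GRing.Theory Num.Theory.
Local Open Scope ring_scope.

Section LA.
Variables (R : realType) (n : nat).
Implicit Types (u v w x y : 'cV[R]_n) (M P : 'M[R]_n).

Lemma dotvE u v : dotv u v = \sum_i u i 0 * v i 0.
Proof. by rewrite /dotv mxE; apply: eq_bigr => i _; rewrite mxE. Qed.

Lemma dotvC u v : dotv u v = dotv v u.
Proof. by rewrite !dotvE; apply: eq_bigr => i _; rewrite mulrC. Qed.

Lemma dotvDl u v w : dotv (u + v) w = dotv u w + dotv v w.
Proof. by rewrite !dotvE -big_split; apply: eq_bigr => i _; rewrite mxE mulrDl. Qed.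

Lemma dotvDr u v w : dotv w (u + v) = dotv w u + dotv w v.
Proof. by rewrite !(dotvC w) dotvDl. Qed.

Lemma dotvZl (c : R) u v : dotv (c *: u) v = c * dotv u v.
Proof. by rewrite !dotvE mulr_sumr; apply: eq_bigr => i _; rewrite mxE mulrA. Qed.

Lemma dotvZr (c : R) u v : dotv v (c *: u) = c * dotv v u.
Proof. by rewrite !(dotvC v) dotvZl. Qed.

Lemma dotvNl u v : dotv (- u) v = - dotv u v.
Proof. by rewrite -scaleN1r dotvZl mulN1r. Qed.

Lemma dotvNr u v : dotv v (- u) = - dotv v u.
Proof. by rewrite !(dotvC v) dotvNl. Qed.

Lemma dotv0l v : dotv 0 v = 0.
Proof. by rewrite -(scale0r 0) dotvZl mul0r. Qed.

Lemma dotv_ge0 u : 0 <= dotv u u.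
Proof. by rewrite dotvE; apply: sumr_ge0 => i _; rewrite -expr2 sqr_ge0. Qed.

Lemma dotv_eq0 u : dotv u u = 0 -> u = 0.
Proof.
rewrite dotvE => /psumr_eq0P H; apply/matrixP => i j; rewrite ord1 mxE.
have /eqP := H (fun k _ => ltac:(by rewrite -expr2 sqr_ge0)) i isT.
by rewrite mulf_eq0 orbb => /eqP.
Qed.

Lemma dotv_mull M u v : dotv (M *m u) v = dotv u (M^T *m v).
Proof. by rewrite /dotv trmx_mul mulmxA. Qed.

Lemma enorm_ge0 u : 0 <= enorm u.
Proof. exact: sqrtr_ge0. Qed.

Lemma enorm_sq u : enorm u ^+ 2 = dotv u u.
Proof. by rewrite /enorm sqr_sqrtr // dotv_ge0. Qed.

Lemma enorm_eq0 u : enorm u = 0 -> u = 0.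
Proof.
move=> /eqP; rewrite sqrtr_eq0 => H; apply: dotv_eq0.
by apply/eqP; rewrite eq_le H dotv_ge0.
Qed.

Lemma enorm0 : enorm (0 : 'cV[R]_n) = 0.
Proof. by rewrite /enorm dotv0l sqrtr0. Qed.

Lemma enormZ (c : R) u : enorm (c *: u) = `|c| * enorm u.
Proof.
by rewrite /enorm dotvZl dotvZr mulrA -expr2 sqrtrM ?sqr_ge0 // sqrtr_sqr.
Qed.

Lemma enormN u : enorm (- u) = enorm u.
Proof. by rewrite -scaleN1r enormZ normrN1 mul1r. Qed.

Lemma dotv_sub u v : dotv (u - v) (u - v) = dotv u u - 2 * dotv u v + dotv v v.
Proof. rewrite dotvDl !dotvDr !dotvNl !dotvNr (dotvC v u); ring. Qed.

Lemma cauchy_schwarz u v : dotv u v <= enorm u * enorm v.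
Proof.
have [a0|] := eqVneq (enorm u) 0.
  by rewrite (enorm_eq0 a0) dotv0l enorm0 mul0r.
have [b0|] := eqVneq (enorm v) 0.
  by rewrite (enorm_eq0 b0) dotvC dotv0l enorm0 mulr0.
move=> bn0 an0.
have ha := enorm_ge0 u; have hb := enorm_ge0 v.
have ha' : 0 < enorm u by rewrite lt_def an0.
have hb' : 0 < enorm v by rewrite lt_def bn0.
have := dotv_ge0 (enorm v *: u - enorm u *: v).
rewrite dotv_sub !dotvZl !dotvZr -!enorm_sq => H.
have hab : 0 < enorm u * enorm v by apply: mulr_gt0.
nra.
Qed.

Lemma enormD u v : enorm (u + v) <= enorm u + enorm v.
Proof.
have h1 : enorm (u + v) ^+ 2 <= (enorm u + enorm v) ^+ 2.
  rewrite enorm_sq dotvDl !dotvDr (dotvC v u) -!enorm_sq.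
  have := cauchy_schwarz u v; nra.
have := enorm_ge0 (u + v); have := enorm_ge0 u; have := enorm_ge0 v; nra.
Qed.


Definition opb M (L : R) := forall x, enorm (M *m x) <= L * enorm x.

Lemma opb_le M a b : a <= b -> opb M a -> opb M b.
Proof. move=> ab H x; apply: (le_trans (H x)); apply: ler_wpM2r => //; exact: enorm_ge0. Qed.

Lemma opbD M P a b : opb M a -> opb P b -> opb (M + P) (a + b).
Proof.
move=> HM HP x; rewrite mulmxDl mulrDl.
apply: (le_trans (enormD _ _)); exact: lerD.
Qed.

Lemma opbN M a : opb M a -> opb (- M) a.
Proof. by move=> H x; rewrite mulNmx enormN. Qed.

Lemma opbB M P a b : opb M a -> opb P b -> opb (M - P) (a + b).
Proof. by move=> HM HP; apply: opbD => //; apply: opbN. Qed.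

Lemma opbM M P a b : 0 <= a -> opb M a -> opb P b -> opb (M *m P) (a * b).
Proof.
move=> a0 HM HP x; rewrite -mulmxA -mulrA.
apply: (le_trans (HM _)); exact: ler_wpM2l.
Qed.

Lemma opbZ M a (c : R) : opb M a -> opb (c *: M) (`|c| * a).
Proof.
move=> H x; rewrite -scalemxAl enormZ -mulrA; apply: ler_wpM2l => //.
Qed.

Lemma opb0 : opb 0 0.
Proof. by move=> x; rewrite mul0mx enorm0 mul0r. Qed.

Lemma opb1 : opb 1%:M 1.
Proof. by move=> x; rewrite mul1mx mul1r. Qed.

Lemma opb_tr M a : 0 <= a -> opb M a -> opb M^T a.
Proof.
move=> a0 H x.
have h : enorm (M^T *m x) ^+ 2 <= a * enorm x * enorm (M^T *m x).
  rewrite enorm_sq dotv_mull trmxK dotvC.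
  apply: (le_trans (cauchy_schwarz _ _)).
  rewrite [a * _ * _]mulrAC; apply: ler_wpM2r; first exact: enorm_ge0.
  exact: H.
have := enorm_ge0 (M^T *m x); have := enorm_ge0 x.
have : 0 <= a * enorm x by apply: mulr_ge0 => //; exact: enorm_ge0.
nra.
Qed.


Lemma coord_sq_le u (j : 'I_n) : u j 0 ^+ 2 <= dotv u u.
Proof.
rewrite dotvE (bigD1 j) //= -expr2 lerDl; apply: sumr_ge0 => i _.
by rewrite -expr2 sqr_ge0.
Qed.

Lemma specnorm_ub M : has_ubound [set enorm (M *m x) | x in [set x : 'cV[R]_n | enorm x <= 1]].
Proof.
pose K := \sum_i \sum_j `|M i j|.
exists (1 + n%:R * K ^+ 2) => _ [x /= hx <-].
have hxj : forall j, `|x j 0| <= 1.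
  move=> j; have := coord_sq_le x j; rewrite -enorm_sq => h.
  have := enorm_ge0 x => h0.
  rewrite ler_norml; apply/andP; split; nra.
have hK : forall i, `|(M *m x) i 0| <= K.
  move=> i; rewrite mxE; apply: (le_trans (ler_norm_sum _ _ _)).
  apply: (@le_trans _ _ (\sum_j `|M i j|)).
    apply: ler_sum => j _; rewrite normrM; apply: ler_piMr => //.
  rewrite /K [X in _ <= X](bigD1 i) //= lerDl. apply: sumr_ge0 => k _.
  by apply: sumr_ge0 => l _.
have hE : enorm (M *m x) ^+ 2 <= n%:R * K ^+ 2.
  rewrite enorm_sq dotvE.
  apply: (@le_trans _ _ (\sum_(i < n) K ^+ 2)).
    apply: ler_sum => i _; rewrite -expr2 -real_normK ?num_real //.
    have := hK i; have := normr_ge0 ((M *m x) i 0); nra.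
  by rewrite sumr_const card_ord mulr_natl.
have := enorm_ge0 (M *m x); nra.
Qed.

Lemma opb_spec M : opb M (specnorm M).
Proof.
move=> x.
have [x0|xn0] := eqVneq (enorm x) 0.
  by rewrite (enorm_eq0 x0) mulmx0 enorm0 mulr0.
have xp : 0 < enorm x by rewrite lt_def xn0 enorm_ge0.
pose c := (enorm x)^-1.
have cp : 0 < c by rewrite invr_gt0.
have hin : enorm (M *m (c *: x)) <= specnorm M.
  apply: (ub_le_sup (specnorm_ub M)); exists (c *: x) => //=.
  by rewrite enormZ gtr0_norm // mulVf.
move: hin; rewrite -scalemxAr enormZ gtr0_norm // => hin.
have -> : enorm (M *m x) = enorm x * (c * enorm (M *m x)).
  by rewrite mulrA divff // mul1r.
by rewrite mulrC; apply: ler_wpM2r => //; exact: enorm_ge0.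
Qed.


Lemma inv_bound E e : 0 <= e -> e < 1 -> opb E e ->
  (1%:M - E) \in unitmx /\ opb (invmx (1%:M - E)) (1 - e)^-1.
Proof.
move=> e0 e1 HE.
have inj : forall x, (1%:M - E) *m x = 0 -> x = 0.
  move=> x; rewrite mulmxBl mul1mx => /eqP; rewrite subr_eq0 => /eqP hx.
  apply: enorm_eq0; have := HE x; rewrite -hx => h.
  have := enorm_ge0 x; nra.
have U : (1%:M - E) \in unitmx.
  rewrite unitmxE unitfE; apply/negP => /eqP hd.
  have : \det (1%:M - E)^T == 0 by rewrite det_tr hd.
  move=> /det0P [v vn0 hv].
  have : (1%:M - E) *m v^T = 0 by rewrite -[_ *m _]trmxK trmx_mul trmxK hv trmx0.
  move=> /inj /eqP; rewrite -trmx0 (inj_eq (@trmx_inj _ _ _)) => /eqP hv0.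
  by move: vn0; rewrite hv0 eqxx.
split=> // x.
set y := invmx (1%:M - E) *m x.
have hy : x = y - E *m y.
  have : x = (1%:M - E) *m y by rewrite /y mulKVmx.
  by rewrite mulmxBl mul1mx.
have h1 : enorm y <= enorm x + e * enorm y.
  rewrite {1}(_ : y = x + E *m y); last by rewrite hy subrK.
  apply: (le_trans (enormD _ _)); exact: lerD.
have h2 : (1 - e) * enorm y <= enorm x by nra.
have pe : 0 < 1 - e by rewrite subr_gt0.
have -> : enorm y = (1 - e)^-1 * ((1 - e) * enorm y).
  by rewrite mulrA mulVf ?mul1r // gt_eqF.
by apply: ler_wpM2l => //; rewrite invr_ge0 ltW.
Qed.

Lemma inv_comm (E : 'M[R]_n) : (1%:M - E) \in unitmx ->
  invmx (1%:M - E) *m E = E *m invmx (1%:M - E).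
Proof.
move=> U; set M := 1%:M - E.
have c : M *m E = E *m M by rewrite /M mulmxBl mulmxBr mul1mx mulmx1.
apply: (canRL (mulmxK U)).
by rewrite -mulmxA -c mulmxA mulVmx // mul1mx.
Qed.


Definition qf M x := (x^T *m M *m x) 0 0.

Lemma qfD M P x : qf (M + P) x = qf M x + qf P x.
Proof. by rewrite /qf mulmxDr mulmxDl mxE. Qed.
Lemma qfN M x : qf (- M) x = - qf M x.
Proof. by rewrite /qf mulmxN mulNmx mxE. Qed.
Lemma qfB M P x : qf (M - P) x = qf M x - qf P x.
Proof. by rewrite qfD qfN. Qed.
Lemma qfZ (c : R) M x : qf (c *: M) x = c * qf M x.
Proof. by rewrite /qf -scalemxAr -scalemxAl mxE. Qed.
Lemma qf_dot M x : qf M x = dotv x (M *m x).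
Proof. by rewrite /qf /dotv mulmxA. Qed.
Lemma qf_tm P x : qf (P^T *m P) x = dotv (P *m x) (P *m x).
Proof. by rewrite qf_dot /dotv trmx_mul !mulmxA. Qed.
Lemma qf_mt P x : qf (P *m P^T) x = dotv (P^T *m x) (P^T *m x).
Proof. by rewrite -qf_tm trmxK. Qed.
Lemma qf_tr M x : qf M^T x = qf M x.
Proof. by rewrite !qf_dot -dotv_mull dotvC. Qed.

Lemma ub_inv (d z w : R) : 0 < d -> z <= d * w -> d^-1 * z <= w.
Proof.
move=> d0 h; rewrite -(ler_pM2l d0) mulrA divff ?gt_eqF // mul1r //.
Qed.

Lemma amgm3 (L0 r Q : R) : 0 < L0 -> 2 * r * Q <= 1 / (3 * L0) * r ^+ 2 + 3 * L0 * Q ^+ 2.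
Proof.
move=> L00.
have e : 1 / (3 * L0) * (r - 3 * L0 * Q) ^+ 2 = 1 / (3 * L0) * r ^+ 2 - 2 * r * Q + 3 * L0 * Q ^+ 2.
  by field; rewrite gt_eqF.
have : 0 <= 1 / (3 * L0) * (r - 3 * L0 * Q) ^+ 2.
  by apply: mulr_ge0; [rewrite divr_ge0 // mulr_ge0 // ltW | exact: sqr_ge0].
rewrite e; lra.
Qed.

Lemma final_ineq (L0 P Q r Z d : R) : 0 < L0 -> 0 <= P -> 0 <= Q -> 0 <= r -> 0 <= Z ->
  Z <= 3 / 2 * L0 * (P + r) -> d <= r * Q + Z * Q ->
  2 * d <= 6 * L0 * Q ^+ 2 + 4 * L0 * P ^+ 2 + (4 * L0 + 1 / (3 * L0)) * r ^+ 2.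
Proof.
move=> L00 P0 Q0 r0 Z0 hZ hd.
have h1 := amgm3 r Q L00.
have h2 : Z * Q <= 3 / 2 * L0 * (P + r) * Q by apply: ler_wpM2r.
have h3 : 0 <= L0 * ((P - Q) ^+ 2 + (r - Q) ^+ 2).
  by apply: mulr_ge0; [exact: ltW | apply: addr_ge0; exact: sqr_ge0].
nra.
Qed.


Section Core.
Variables (A B C : 'M[R]_n) (eta L0 : R).
Hypotheses (eta0 : 0 < eta) (L00 : 0 < L0) (L0s : L0 ^+ 2 <= 1 / 200)
  (hA : opb (eta *: A) L0) (hB : opb (eta *: B) L0) (hC : opb C (2 * L0 ^+ 2)).

Let E := eta *: A - C.
Let e := L0 + 2 * L0 ^+ 2.

Lemma e_ge0 : 0 <= e. Proof. rewrite /e. have := L00. nra. Qed.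
Lemma L0_small : L0 < 1 / 10.
Proof. have := L00; have := L0s; nra. Qed.
Lemma e_lt1 : e < 1. Proof. rewrite /e; have := L0_small; have := L00; nra. Qed.
Lemma hE : opb E e. Proof. exact: opbB. Qed.
Lemma eqIE : 1%:M - eta *: A + C = 1%:M - E.
Proof. by rewrite /E opprB addrA addrAC. Qed.
Lemma GU : (1%:M - E) \in unitmx.
Proof. by case: (inv_bound e_ge0 e_lt1 hE). Qed.
Lemma hG : opb (invmx (1%:M - E)) (1 - e)^-1.
Proof. by case: (inv_bound e_ge0 e_lt1 hE). Qed.
Lemma k_le : (1 - e)^-1 * e <= 3 / 2 * L0.
Proof.
apply: ub_inv; first by have := e_lt1; lra.
rewrite /e; have := L0_small; have := L00; nra.
Qed.

Lemma Cstep : opb (invmx (1%:M - eta *: A + C) *m (eta *: (eta *: A - C)) *m B) (2 * L0 ^+ 2).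
Proof.
rewrite eqIE -/E -mulmxA -scalemxAl scalemxAr.
have h := opbM e_ge0 hE hB.
have ep : 0 <= (1 - e)^-1 by rewrite invr_ge0; have := e_lt1; lra.
have h2 := opbM ep hG h.
apply: opb_le h2; rewrite mulrA; have := k_le; have := L00; have := L0_small; nra.
Qed.

Let G := invmx (1%:M - E).
Let X := - C + E *m G *m E.

Lemma DX : - (eta *: (C *m B)) + invmx (1%:M - eta *: A + C)
      *m ((eta *: A - C) *m (eta *: A - C)) *m (eta *: B) = X *m (eta *: B).
Proof.
rewrite eqIE -/E -/G scalemxAr /X [in RHS]mulmxDl [in RHS]mulNmx; congr (_ + _).
by rewrite [G *m (E *m E)]mulmxA (inv_comm GU).
Qed.

Lemma enorm_b x : enorm ((eta *: B) *m x) = eta * enorm (B *m x).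
Proof. by rewrite -scalemxAl enormZ gtr0_norm. Qed.

Lemma hX : opb X (4 * L0 ^+ 2).
Proof.
have ep : 0 <= (1 - e)^-1 by rewrite invr_ge0; have := e_lt1; lra.
have h := opbD (opbN hC) (opbM (mulr_ge0 e_ge0 ep) (opbM e_ge0 hE hG) hE).
apply: opb_le h; have := k_le; rewrite [_^-1 * e]mulrC => hk.
have : e * (1 - e)^-1 * e <= 3/2 * L0 * e by apply: ler_wpM2r => //; exact: e_ge0.
rewrite /e; have := L00; have := L0_small; nra.
Qed.

Lemma claim2 : loewner_le (((X *m (eta *: B)))^T *m (X *m (eta *: B)))
   ((60 * L0 ^+ 4 * eta ^+ 2) *: (B^T *m B)).
Proof.
move=> x; change (0 <= qf ((60 * L0 ^+ 4 * eta ^+ 2) *: (B^T *m B) -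
   (X *m (eta *: B))^T *m (X *m (eta *: B))) x).
rewrite qfB qfZ !qf_tm -!enorm_sq.
have h := hX ((eta *: B) *m x); rewrite mulmxA enorm_b in h.
set q := enorm (B *m x) in h *; set d := enorm _ in h *.
have q0 : 0 <= q by exact: enorm_ge0.
have d0 : 0 <= d by exact: enorm_ge0.
have w0 : 0 <= 4 * L0 ^+ 2 * (eta * q) by apply: mulr_ge0; [nra| exact: mulr_ge0 (ltW eta0) q0].
have h2 : d ^+ 2 <= (4 * L0 ^+ 2 * (eta * q)) ^+ 2 by nra.
have -> : 60 * L0 ^+ 4 * eta ^+ 2 * q ^+ 2 = 60 * (L0 ^+ 2 * eta * q) ^+ 2 by ring.
move: h2; have -> : (4 * L0 ^+ 2 * (eta * q)) ^+ 2 = 16 * (L0 ^+ 2 * eta * q) ^+ 2 by ring.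
have := sqr_ge0 (L0 ^+ 2 * eta * q); lra.
Qed.

Lemma claim1 : loewner_le (X *m (eta *: B) + (X *m (eta *: B))^T)
      ((6 * L0 * eta ^+ 2) *: (B^T *m B)
       + (4 * L0 * eta ^+ 2) *: (A *m A^T)
       + (4 * L0 + 1 / (3 * L0)) *: (C *m C^T)).
Proof.
move=> x; change (0 <= qf ((6 * L0 * eta ^+ 2) *: (B^T *m B)
       + (4 * L0 * eta ^+ 2) *: (A *m A^T)
       + (4 * L0 + 1 / (3 * L0)) *: (C *m C^T) - (X *m (eta *: B) + (X *m (eta *: B))^T)) x).
rewrite qfB !qfD !qfZ qf_tm !qf_mt qf_tr -!enorm_sq.
rewrite qf_dot -mulmxA dotvC dotv_mull dotvC.
set y := (eta *: B) *m x.
have XT : forall Y : 'M[R]_n, (- C + Y)^T = - C^T + Y^T.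
  by move=> Y; apply/matrixP => i j; rewrite !mxE.
rewrite /X XT !trmx_mul mulmxDl mulNmx dotvDl dotvNl.
set p := enorm (A^T *m x); set q := enorm (B *m x); set r := enorm (C^T *m x).
have hy : enorm y = eta * q by rewrite /y enorm_b.
have hr : - dotv (C^T *m x) y <= r * (eta * q).
  by rewrite -dotvNl -hy /r -(enormN (C^T *m x)); exact: cauchy_schwarz.
have hEt : enorm (E^T *m x) <= eta * p + r.
  have -> : E^T = eta *: A^T - C^T by apply/matrixP => i j; rewrite !mxE.
  rewrite mulmxBl.
  apply: (le_trans (enormD _ _)); rewrite enormN -scalemxAl enormZ gtr0_norm //.
have ep : 0 <= (1 - e)^-1 by rewrite invr_ge0; have := e_lt1; lra.
have hk : e * (1 - e)^-1 <= 3 / 2 * L0 by rewrite mulrC; exact: k_le.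
have hZ : enorm (E^T *m (G^T *m E^T) *m x) <= 3 / 2 * L0 * (eta * p + r).
  have h := opbM e_ge0 (opb_tr e_ge0 hE) (opb_tr ep hG) (E^T *m x).
  rewrite !mulmxA in h *; apply: (le_trans h).
  apply: (le_trans (ler_wpM2r (enorm_ge0 _) hk)).
  by apply: ler_wpM2l => //; have := L00; lra.
set W := E^T *m (G^T *m E^T) *m x.
have hW := cauchy_schwarz W y; rewrite hy in hW.
have p0 : 0 <= eta * p by apply: mulr_ge0; [exact: ltW | exact: enorm_ge0].
have q0 : 0 <= eta * q by apply: mulr_ge0; [exact: ltW | exact: enorm_ge0].
have key := final_ineq L00 p0 q0 (enorm_ge0 _) (enorm_ge0 W) hZ
   (_ : - dotv (C^T *m x) y + dotv W y <= _).
have := key (lerD hr hW); rewrite !exprMn. move=> hh; rewrite -/r !mulrA in hh; rewrite !mulrA.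
lra.
Qed.

End Core.

End LA.

Theorem lemma16 (R : realType) (n : nat) (F : 'cV[R]_n -> 'cV[R]_n)
  (J : 'cV[R]_n -> 'M[R]_n) (ell Lam eta L0 : R) (zm1 z0 : 'cV[R]_n) (T : nat) :
  monotone_op F ->
  (forall z z', enorm (F z - F z') <= ell * enorm (z - z')) ->
  is_jacobian F J ->
  (forall z z', specnorm (J z - J z') <= Lam * enorm (z - z')) ->
  0 < eta ->
  (1 <= T)%N ->
  0 < L0 ->
  (forall t : nat, (t <= T)%N ->
     eta * specnorm (ogA F J eta zm1 z0 t) <= L0 /\
     eta * specnorm (ogB F J eta zm1 z0 t) <= L0) ->
  L0 <= Num.sqrt (1 / 200) ->
  eta * ell <= 2 / 3 ->
  forall t : nat, (1 <= t)%N -> (t <= T)%N ->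
    let A := ogA F J eta zm1 z0 t in
    let B := ogB F J eta zm1 z0 t in
    let C := ogC F J eta zm1 z0 T t in
    let D := ogD F J eta zm1 z0 T t in
    loewner_le (D + D^T)
      ((6 * L0 * eta ^+ 2) *: (B^T *m B)
       + (4 * L0 * eta ^+ 2) *: (A *m A^T)
       + (4 * L0 + 1 / (3 * L0)) *: (C *m C^T))
    /\
    loewner_le (D^T *m D) ((60 * L0 ^+ 4 * eta ^+ 2) *: (B^T *m B)).
Proof.
move=> mono lip jac jl eta0 T1 L00 hAB L0s el t t1 tT A B C D.
have L0sq : L0 ^+ 2 <= 1 / 200.
  have s0 := sqrtr_ge0 (1 / 200 : R).
  have h1 : L0 * L0 <= L0 * Num.sqrt (1 / 200) by apply: ler_wpM2l => //; exact: ltW.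
  have h2 : L0 * Num.sqrt (1 / 200) <= Num.sqrt (1 / 200) * Num.sqrt (1 / 200).
    by apply: ler_wpM2r.
  rewrite expr2; apply: (le_trans h1); apply: (le_trans h2).
  have h0 : (0:R) <= 1 / 200 by lra.
  by rewrite -expr2 sqr_sqrtr.
have hop : forall s, (s <= T)%N -> opb (eta *: ogA F J eta zm1 z0 s) L0 /\
                                    opb (eta *: ogB F J eta zm1 z0 s) L0.
  move=> s sT; have [h1 h2] := hAB s sT.
  have := opbZ eta (opb_spec (ogA F J eta zm1 z0 s)).
  rewrite gtr0_norm // => h3.
  have := opbZ eta (opb_spec (ogB F J eta zm1 z0 s)).
  rewrite gtr0_norm // => h4.
  split; [exact: (opb_le h1 h3) | exact: (opb_le h2 h4)].
have hCb : forall k, opb (Caux F J eta zm1 z0 T k) (2 * L0 ^+ 2).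
  elim => [|k IH].
    have h0 : (0:R) <= 2 * L0 ^+ 2 by rewrite mulr_ge0 // sqr_ge0.
    exact: (opb_le h0 (@opb0 R n)).
  have [hA' hB'] := hop _ (leq_subr k T).
  exact: (Cstep L00 L0sq hA' hB' IH).
have [hA hB] := hop t tT.
have hC : opb C (2 * L0 ^+ 2) by exact: hCb.
rewrite /D /ogD -/A -/B -/C (DX B L00 L0sq hA hC).
split; [exact: (claim1 B eta0 L00 L0sq hA hC) | exact: (claim2 B eta0 L00 L0sq hA hC)].
Qed.
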